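(* Let $G=G_{\mathbf E}$ be a multi-GGS group which is not the constant GGS group. Then $$N_{\mathrm{lab}(\Sigma)}(A)\le C(A)\qquad\text{and}\qquad N_{\mathrm{lab}(\Sigma)}(B)\le C(B),$$ where $C(\cdot)$ denotes the centraliser in $\mathrm{Aut}(X^* )$.
   Context: Let $p$ be an odd prime and $X=\{0,1,\dots,p-1\}$, identified with $\mathbb F_p$. $X^*$ is the $p$-regular rooted tree of finite words over $X$; $\mathrm{Aut}(X^* )$ acts on the right. Sections $g|_v$ are defined by $(vw)^g=v^g\,w^{g|_v}$, and the label $g|^v\in\mathrm{Sym}(X)$ is the permutation by which $g|_v$ acts on one-letter words. $\mathrm{Stab}(1)$ is the stabiliser of all one-letter words and $\psi_1\colon\mathrm{Stab}(1)\to\mathrm{Aut}(X^* )^p$, $g\mapsto(g|_0,\dots,g|_{p-1})$, is an isomorphism. $\sigma=(0\,1\,\cdots\,p-1)$, $\Sigma=\langle\sigma\rangle$; $a$ is the rooted automorphism acting as $\sigma$ on the first letter and trivially on the rest, $A=\langle a\rangle$. $\mathrm{lab}(\Sigma)=\{g\in\mathrm{Aut}(X^* )\mid g|^v\in\Sigma\text{ for all } v\in X^*\}$. Let $\mathbf E\le\mathbb F_p^{p-1}$ be a subspace of dimension $r\ge1$; $E$ is the $r\times(p-1)$ matrix whose rows form a fixed basis of $\mathbf E$, with columns $\mathbf e_1,\dots,\mathbf e_{p-1}$. For $\mathbf n\in\mathbb F_p^r$, $b^{\mathbf n}\in\mathrm{Stab}(1)$ is the unique automorphism with $\psi_1(b^{\mathbf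 n})=(b^{\mathbf n},a^{\mathbf n\cdot\mathbf e_1},\dots,a^{\mathbf n\cdot\mathbf e_{p-1}})$; $B=\{b^{\mathbf n}\}$. $G_{\mathbf E}$ is generated by $a$ and $B$; it is the constant GGS group if $\mathbf E=\{(\lambda,\dots,\lambda)\mid\lambda\in\mathbb F_p\}$. *)

(* Defs.v *)
From mathcomp Require Import all_boot all_order all_fingroup all_algebra.
Set Implicit Arguments. Unset Strict Implicit. Unset Printing Implicit Defensive.
Import GRing.Theory.
Local Open Scope ring_scope.

Notation X p := ('F_p : finFieldType).

(* An automorphism of the rooted tree X^* is represented by its portrait:
   the map v |-> g|^v in Sym(X) (every portrait gives a unique automorphism
   and conversely). *)
Definition tree_aut (p : nat) := seq (X p) -> {perm X p}.

Definition aut_eq p (g h : tree_aut p) : Prop := forall v, g v = h v.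

Definition tree_sect p (g : tree_aut p) (u : seq (X p)) : tree_aut p := fun v => g (u ++ v).

Fixpoint tree_act p (g : tree_aut p) (v : seq (X p)) : seq (X p) :=
  match v with
  | [::] => [::]
  | x :: w => g [::] x :: tree_act (tree_sect g [:: x]) w
  end.

Fixpoint tree_invact p (g : tree_aut p) (v : seq (X p)) : seq (X p) :=
  match v with
  | [::] => [::]
  | x :: w => let y := (g [::])^-1%g x in y :: tree_invact (tree_sect g [:: y]) w
  end.

(* product: first g, then h  ((gh)|^v = g|^v h|^(v^g)); mathcomp's
   perm product s * t is "first s then t". *)
Definition aut_mul p (g h : tree_aut p) : tree_aut p := fun v => (g v * h (tree_act g v))%g.

Definition aut_inv p (g : tree_aut p) : tree_aut p := fun v => ((g (tree_invact g v))^-1)%g.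

Definition sigma_cyc p : {perm X p} := perm (addIr (1 : X p)).

Definition lab_Sigma p (g : tree_aut p) : Prop := forall v, g v \in <[sigma_cyc p]>%g.

Definition apow p (k : nat) : tree_aut p :=
  fun v => if v is [::] then (sigma_cyc p ^+ k)%g else 1%g.

Definition setA_tree p (h : tree_aut p) : Prop := exists k : nat, aut_eq h (@apow p k).

(* n . e_x for a letter x <> 0, the column of E for letter x being
   column x-1 (columns indexed by 'I_(p-1)). *)
Definition bexp p r (E : 'M[X p]_(r, p.-1)) (n : 'rV[X p]_r) (x : X p) : X p :=
  \sum_(j < p.-1 | (j.+1 == x)%N) (n *m E) 0 j.

(* portrait of b^n: psi_1(b^n) = (b^n, a^{n.e_1}, ..., a^{n.e_(p-1)}) *)
Fixpoint bport p r (E : 'M[X p]_(r, p.-1)) (n : 'rV[X p]_r) (v : seq (X p))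
  : {perm X p} :=
  match v with
  | [::] => 1%g
  | x :: w =>
      if x == 0 then bport E n w
      else if w is [::] then (sigma_cyc p ^+ (bexp E n x : nat))%g else 1%g
  end.

Definition setB_tree p r (E : 'M[X p]_(r, p.-1)) (h : tree_aut p) : Prop :=
  exists n : 'rV[X p]_r, aut_eq h (bport E n).

Definition tree_normalises p (S : tree_aut p -> Prop) (g : tree_aut p) : Prop :=
  (forall h, S h -> S (aut_mul (aut_mul (aut_inv g) h) g)) /\
  (forall h, S h -> exists h', S h' /\
                    aut_eq (aut_mul (aut_mul (aut_inv g) h') g) h).

Definition tree_centralises p (S : tree_aut p -> Prop) (g : tree_aut p) : Prop :=
  forall h, S h -> aut_eq (aut_mul g h) (aut_mul h g).

(* Main.v *)
Require Import Defs.
From mathcomp Require Import all_boot all_order all_fingroup all_algebra.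
Local Open Scope ring_scope.
Import GRing.Theory.

Lemma sigX p k (x : X p) : (sigma_cyc p ^+ k)%g x = x + k%:R.
Proof.
elim: k x => [|k IH] x; first by rewrite expg0 perm1 addr0.
by rewrite expgSr permM IH /sigma_cyc permE mulrS addrCA addrA [_ + 1]addrC addrA. 
Qed.

Lemma natFp p (x : X p) : ((x : nat)%:R : X p) = x.
Proof. exact: natr_Zp. Qed.

Lemma tree_act_ext p (f f' : tree_aut p) w : (forall v, f v = f' v) ->
  tree_act f w = tree_act f' w.
Proof.
elim: w f f' => [|x w IH] f f' H //=.
rewrite H; congr (_ :: _); apply: IH => v; exact: H.
Qed.

Lemma tree_act1 p (f : tree_aut p) w : (forall v, f v = 1%g) -> tree_act f w = w.
Proof.
elim: w f => [|x w IH] f H //=.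
by rewrite H perm1 IH // => v; rewrite /tree_sect H.
Qed.

Lemma invact_act p (g : tree_aut p) u : tree_invact g (tree_act g u) = u.
Proof.
elim: u g => [|x w IH] g //=.
by rewrite permK IH.
Qed.

Lemma act_inv p (g : tree_aut p) v : tree_act (aut_inv g) v = tree_invact g v.
Proof.
elim: v g => [|x w IH] g //=.
congr (_ :: _); rewrite -IH; apply: tree_act_ext => v //.
Qed.

Lemma act_mul p (g h : tree_aut p) v : tree_act (aut_mul g h) v = tree_act h (tree_act g v).
Proof.
elim: v g h => [|x w IH] g h //=.
rewrite permM; congr (_ :: _); rewrite -IH; apply: tree_act_ext => v //.
Qed.

Lemma conj_formula p (g h : tree_aut p) u :
  aut_mul (aut_mul (aut_inv g) h) g (tree_act g u) =
  ((g u)^-1 * h u * g (tree_act h u))%g.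
Proof.
rewrite /aut_mul act_mul act_inv invact_act /aut_inv invact_act //.
Qed.

Lemma conj_comm p (g h : tree_aut p) :
  (forall v, aut_mul (aut_mul (aut_inv g) h) g v = h v) ->
  aut_eq (aut_mul g h) (aut_mul h g).
Proof.
move=> H u; rewrite /aut_mul -H conj_formula.
by rewrite !mulgA mulgV mul1g.
Qed.

Lemma cyc_conj p (s t : {perm X p}) : s \in <[sigma_cyc p]>%g -> t \in <[sigma_cyc p]>%g ->
  (s^-1 * t * s)%g = t.
Proof.
case/cycleP=> i ->; case/cycleP=> j ->.
by rewrite -mulgA (commuteX2 j i (commute_refl _)) mulgA mulVg mul1g.
Qed.

Lemma bexp0 p r (E : 'M[X p]_(r, p.-1)) n : bexp E n 0 = 0.
Proof. by rewrite /bexp big_pred0. Qed.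

Lemma bport1 p r (E : 'M[X p]_(r, p.-1)) n y : bport E n [:: y] = (sigma_cyc p ^+ (bexp E n y : nat))%g.
Proof.
rewrite /=; case: eqP => [->|//]; by rewrite bexp0 expg0.
Qed.

Lemma bport_ext p r (E : 'M[X p]_(r, p.-1)) n n' v : (forall x, bexp E n x = bexp E n' x) ->
  bport E n v = bport E n' v.
Proof.
move=> H; elim: v => [|x w IH] //=; case: eqP => // _; case: w IH => // _; by rewrite H.
Qed.

Lemma sig_inj p (a b : X p) : (sigma_cyc p ^+ (a : nat))%g = (sigma_cyc p ^+ (b : nat))%g -> a = b.
Proof.
move=> /(congr1 (fun s : {perm X p} => s 0)); rewrite !sigX !add0r !natFp //.
Qed.

Lemma level1 p r (E : 'M[X p]_(r, p.-1)) (g h : tree_aut p) n n' k :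
  lab_Sigma g -> g [::] = (sigma_cyc p ^+ k)%g ->
  aut_eq h (bport E n) ->
  aut_eq (aut_mul (aut_mul (aut_inv g) h) g) (bport E n') ->
  forall x, bexp E n' (x + k%:R) = bexp E n x.
Proof.
move=> lg gk hn hc x.
have := conj_formula _ g h [:: x].
rewrite /= gk sigX hc bport1 (hn [::]) /= perm1.
rewrite cyc_conj //; last by rewrite hn bport1 mem_cycle.
rewrite hn bport1; exact: sig_inj.
Qed.

Lemma allzero p r (E : 'M[X p]_(r, p.-1)) (m : X p) : m != 0 ->
  (forall n, exists n', forall x, bexp E n' (x + m) = bexp E n x) ->
  forall n x, bexp E n x = 0.
Proof.
move=> m0 sh.
have it : forall j n, exists n'', forall x, bexp E n'' (x + j%:R * m) = bexp E n x.
  elim=> [|j IH] n; first by exists n => x; rewrite mul0r addr0.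
  have [n1 H1] := IH n; have [n2 H2] := sh n1.
  exists n2 => x; rewrite -H1 -H2; congr bexp; rewrite mulrS mulrDl mul1r [m + _]addrC addrA //.
move=> n x; have [n'' H] := it (nat_of_ord (- x / m)) n.
by rewrite -H natFp divfK // addrN bexp0.
Qed.

Lemma E0 p r (E : 'M[X p]_(r, p.-1)) : prime p ->
  (forall n x, bexp E n x = 0) -> E = 0.
Proof.
move=> pp H; apply/matrixP => i j; rewrite mxE.
have lt : (j.+1 < (Zp_trunc (pdiv p)).+2)%N.
  rewrite Fp_cast //; have := ltn_ord j; have := prime_gt1 pp; clear; case: p j => // p j; rewrite succnK ltnS ltnS; by case: p j.
have := H (delta_mx 0 i) (inord j.+1).
rewrite /bexp inordK // (big_pred1 j) => [|j' /=]; last by rewrite eqSS.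
by rewrite -rowE mxE.
Qed.

Theorem mainTheorem7 (p : nat) (r : nat) (E : 'M['F_p]_(r, p.-1)) :
  prime p -> (2 < p)%N -> (0 < r)%N ->
  row_free E ->
  ~~ (E == (const_mx 1 : 'rV['F_p]_(p.-1)))%MS ->
  (forall g : tree_aut p, lab_Sigma g -> tree_normalises (@setA_tree p) g ->
     tree_centralises (@setA_tree p) g) /\
  (forall g : tree_aut p, lab_Sigma g -> tree_normalises (setB_tree E) g ->
     tree_centralises (setB_tree E) g).
Proof.
move=> pp p2 r0 rf _; split=> g lg [Hn _] h hS.
- have [k' hk'] := Hn h hS; case: hS => k hk.
  apply: conj_comm => -[|x w].
  + rewrite (conj_formula _ g h [::]) /= cyc_conj //.
    by rewrite hk mem_cycle.
  + by rewrite hk' hk.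
- have [k gk] : exists k, g [::] = (sigma_cyc p ^+ k)%g.
    by case/cycleP: (lg [::]) => k ->; exists k.
  have m0 : (k%:R : X p) = 0.
    apply: contraTeq rf => m0.
    have sh : forall n, exists n', forall x, bexp E n' (x + k%:R) = bexp E n x.
      move=> n; have [n' hn'] := Hn (bport E n) (ex_intro _ n (fun _ => erefl)).
      by exists n'; exact: (@level1 p r E g (bport E n) n n' k lg gk (fun _ => erefl) hn').
    rewrite (E0 _ _ E pp (allzero _ _ E _ m0 sh)) /row_free mxrank0 eq_sym -lt0n r0 //.
  have [n' hn'] := Hn h hS; case: hS => n hn.
  apply: conj_comm => v; rewrite hn' hn; apply: bport_ext => x.
  by rewrite -(@level1 p r E g h n n' k lg gk hn hn' x) m0 addr0.
Qed.
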